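(* Let $d = 3$, $\rho \ge 0$, and let $r^{(1)}, \dots, r^{(\rho)} \in (0,1)^3$ be pairwise incomparable points whose $3\rho$ coordinates are all distinct. Then the number $\gamma$ of generators of their record-setting region equals $2\rho + 1$.
   Context: For $x,y \in \mathbb{R}^3$, $x \prec y$ means $x_j < y_j$ for all $j$, and $x \le y$ means $x_j \le y_j$ for all $j$; points are incomparable if neither is $\le$ the other. The record-setting region of points $r^{(1)},\dots,r^{(\rho)}$ is $S := \{x \in [0,1)^3 : x \not\prec r^{(i)} \text{ for all } i \in [\rho]\}$, and its generators are the minimal elements of $S$ with respect to $\le$. *)

(* Defs.v *)
(* points of R^3 over an arbitrary real field R
   (the paper's R is the instance R = real numbers). *)
From HB Require Import structures.
From mathcomp Require Import all_boot all_order all_algebra.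
Set Implicit Arguments. Unset Strict Implicit. Unset Printing Implicit Defensive.
Import Order.TTheory GRing.Theory Num.Theory.
Local Open Scope ring_scope.

Notation pt R := 'rV[R]_3.
Definition crd (R : realFieldType) (x : pt R) (j : 'I_3) : R := x ord0 j.

Definition slt (R : realFieldType) (x y : pt R) : Prop :=
  forall j : 'I_3, crd x j < crd y j.
Definition ple (R : realFieldType) (x y : pt R) : Prop :=
  forall j : 'I_3, crd x j <= crd y j.
Definition incomparable (R : realFieldType) (x y : pt R) : Prop :=
  ~ ple x y /\ ~ ple y x.

Definition in_region (R : realFieldType) (rho : nat) (r : 'I_rho -> pt R)
    (x : pt R) : Prop :=
  (forall j : 'I_3, 0 <= crd x j /\ crd x j < 1) /\
  (forall i : 'I_rho, ~ slt x (r i)).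

Definition generator (R : realFieldType) (rho : nat) (r : 'I_rho -> pt R)
    (x : pt R) : Prop :=
  in_region r x /\ (forall y, in_region r y -> ple y x -> y = x).

(* Main.v *)
Require Import Defs.
From HB Require Import structures.
From mathcomp Require Import all_boot all_order all_algebra.
From mathcomp Require Import lra zify.
From Stdlib Require Import Classical.
Import Order.TTheory GRing.Theory Num.Theory.
Local Open Scope ring_scope.
Set Implicit Arguments. Unset Strict Implicit. Unset Printing Implicit Defensive.

Notation i0 := (@Ordinal 3 0 isT).
Notation i1 := (@Ordinal 3 1 isT).
Notation i2 := (@Ordinal 3 2 isT).
Section Gen.
Variable R : realFieldType.
Implicit Types (x y g p q : pt R) (L : seq (pt R)).


Lemma ord3P (P : 'I_3 -> Prop) : P i0 -> P i1 -> P i2 -> forall j, P j.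
Proof.
move=> H0 H1 H2 [[|[|[|m]]] Hm] //.
- by have -> : Ordinal Hm = i0 by apply: val_inj.
- by have -> : Ordinal Hm = i1 by apply: val_inj.
- by have -> : Ordinal Hm = i2 by apply: val_inj.
Qed.

Lemma pt_eq x y : crd x i0 = crd y i0 -> crd x i1 = crd y i1 ->
  crd x i2 = crd y i2 -> x = y.
Proof.
move=> h0 h1 h2; apply/rowP => j.
by move: j; apply: ord3P.
Qed.

Definition setc x (j : 'I_3) (t : R) : pt R :=
  \row_k (if (k : nat) == (j : nat) then t else crd x k).
Lemma crd_setc x j t k : crd (setc x j t) k = if (k : nat) == (j : nat) then t else crd x k.
Proof. by rewrite /crd mxE. Qed.
Lemma crd_setcE x j t k : crd (setc x j t) k = if k == j then t else crd x k.
Proof. by rewrite crd_setc. Qed.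

Definition mk (a b c : R) : pt R :=
  \row_k (if (k : nat) == 0%N then a else if (k : nat) == 1%N then b else c).
Lemma crd_mk a b c k : crd (mk a b c) k =
  if (k : nat) == 0%N then a else if (k : nat) == 1%N then b else c.
Proof. by rewrite /crd mxE. Qed.

Definition box x := forall j, 0 <= crd x j /\ crd x j < 1.
Definition inR L x := box x /\ forall q, q \in L -> ~ slt x q.
Definition genL L x := inR L x /\ forall y, inR L y -> ple y x -> y = x.

Lemma boxP x : 0 <= crd x i0 < 1 -> 0 <= crd x i1 < 1 -> 0 <= crd x i2 < 1 -> box x.
Proof.
move=> /andP[? ?] /andP[? ?] /andP[? ?]; apply: ord3P; by split.
Qed.

Lemma boxE x j : box x -> 0 <= crd x j < 1.
Proof. by move=> /(_ j) [-> ->]. Qed.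

Lemma box_setc x j t : box x -> 0 <= t < 1 -> box (setc x j t).
Proof.
move=> Hb /andP[h0 h1] k; rewrite crd_setcE; case: eqP => _; [by split|exact: Hb k].
Qed.

Lemma ord3_cases (j : 'I_3) : j = i0 \/ j = i1 \/ j = i2.
Proof.
case: j => [[|[|[|m]]] Hm] //.
- by left; apply: val_inj.
- by right; left; apply: val_inj.
- by right; right; apply: val_inj.
Qed.

Lemma sltP x y : crd x i0 < crd y i0 -> crd x i1 < crd y i1 -> crd x i2 < crd y i2 -> slt x y.
Proof. move=> ? ? ?; by apply: ord3P. Qed.

Lemma pleP x y : crd x i0 <= crd y i0 -> crd x i1 <= crd y i1 -> crd x i2 <= crd y i2 -> ple x y.
Proof. move=> ? ? ?; by apply: ord3P. Qed.

Lemma up_closed L x y : inR L x -> ple x y -> box y -> inR L y.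
Proof.
move=> [_ Hx] Hxy By; split=> // q Hq Hs; apply: (Hx q Hq) => j.
exact: le_lt_trans (Hxy j) (Hs j).
Qed.

Lemma gen_down L x : inR L x ->
  (forall j t, 0 <= t -> t < crd x j -> ~ inR L (setc x j t)) -> genL L x.
Proof.
move=> Hx Hd; split=> // y Hy Hyx.
have key : forall j, crd y j = crd x j.
  move=> j; have := Hyx j; rewrite le_eqVlt => /orP[/eqP //|lt].
  exfalso; apply: (Hd j (crd y j)) => //; first by case: (Hy.1 j).
  apply: (up_closed Hy).
    move=> k; rewrite crd_setcE; case: eqP => [<- //|_]; exact: Hyx.
  move=> k; rewrite crd_setcE; case: eqP => _; [exact: Hy.1|exact: Hx.1].
by apply: pt_eq; apply: key.
Qed.

Lemma gen_downE L x j t : genL L x -> 0 <= t -> t < crd x j -> ~ inR L (setc x j t).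
Proof.
move=> [Hx Hm] t0 tx H.
have := Hm _ H; move/(_ _)/(congr1 (fun z => crd z j)).
rewrite crd_setcE eqxx => E.
have : t = crd x j by apply: E => k; rewrite crd_setcE; case: eqP => [-> |_ //]; exact: ltW.
by move=> e; move: tx; rewrite e ltxx.
Qed.

Definition fmax (s : seq R) := foldr (fun v m => if v <= m then m else v) 0 s.
Lemma fmax_max (a m : R) : a <= (if a <= m then m else a) /\ m <= (if a <= m then m else a).
Proof. case: ifP => h; split => //; move/negbT: h; rewrite -ltNge => /ltW //. Qed.
Lemma fmax_ge s v : v \in s -> v <= fmax s.
Proof.
elim: s => //= a s IH; rewrite in_cons => /orP[/eqP ->|/IH h].
  exact: (fmax_max a (fmax s)).1.
exact: le_trans h (fmax_max a (fmax s)).2.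
Qed.
Lemma fmax_in s : fmax s = 0 \/ fmax s \in s.
Proof.
elim: s => [|a s IH] /=; first by left.
case: ifP => _; last by right; rewrite mem_head.
by case: IH => [->|h]; [left|right; rewrite in_cons h orbT].
Qed.
Lemma fmax_ge0 s : 0 <= fmax s.
Proof.
elim: s => //= a s IH; exact: le_trans IH (fmax_max a (fmax s)).2.
Qed.


Ltac cr := rewrite ?crd_setc ?crd_mk /=.

Section Step.
Variables (p : pt R) (L' : seq (pt R)).
Hypothesis Hbox : forall q, q \in p :: L' -> forall j, 0 < crd q j < 1.
Hypothesis Hinc : forall q q', q \in p :: L' -> q' \in p :: L' -> q != q' -> incomparable q q'.
Hypothesis Hdist : forall q q' j j', q \in p :: L' -> q' \in p :: L' ->
  crd q j = crd q' j' -> q = q' /\ j = j'.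
Hypothesis Hnot : p \notin L'.
Hypothesis Hmin : forall q, q \in L' -> crd p i2 <= crd q i2.

Lemma pL : p \in p :: L'. Proof. exact: mem_head. Qed.
Lemma qL q : q \in L' -> q \in p :: L'. Proof. by rewrite in_cons orbC => ->. Qed.
Lemma pne q : q \in L' -> p != q.
Proof. by move=> Hq; apply/eqP => E; move: Hnot; rewrite E Hq. Qed.
Lemma cneq q j k : q \in L' -> crd q j != crd p k.
Proof.
move=> Hq; apply/eqP => E; have [E1 _] := Hdist (qL Hq) pL E.
by move: (pne Hq); rewrite E1 eqxx.
Qed.
Lemma zlt q : q \in L' -> crd p i2 < crd q i2.
Proof. move=> Hq; rewrite lt_neqAle Hmin // andbT eq_sym; exact: cneq. Qed.
Lemma pb j : 0 < crd p j < 1. Proof. exact: Hbox pL j. Qed.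
Lemma qb q j : q \in L' -> 0 < crd q j < 1. Proof. move=> Hq; exact: Hbox (qL Hq) j. Qed.

Lemma inR_cons x : inR (p :: L') x <-> ~ slt x p /\ inR L' x.
Proof.
split.
  move=> [Hb H]; split; first by apply: H pL.
  by split => // q Hq; apply: H (qL Hq).
move=> [Hs [Hb H]]; split => // q; rewrite in_cons => /orP[/eqP -> //|Hq]; exact: H.
Qed.

Lemma dom01 q : q \in L' -> crd p i0 < crd q i0 -> crd q i1 < crd p i1.
Proof.
move=> Hq h0; have [Hi _] := Hinc pL (qL Hq) (pne Hq).
case: (ltgtP (crd q i1) (crd p i1)) => // [h1|E]; last by move: (cneq i1 i1 Hq); rewrite E eqxx.
exfalso; apply: Hi; apply: pleP; apply: ltW => //; exact: zlt.
Qed.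
Lemma dom10 q : q \in L' -> crd p i1 < crd q i1 -> crd q i0 < crd p i0.
Proof.
move=> Hq h0; have [Hi _] := Hinc pL (qL Hq) (pne Hq).
case: (ltgtP (crd q i0) (crd p i0)) => // [h1|E]; last by move: (cneq i0 i0 Hq); rewrite E eqxx.
exfalso; apply: Hi; apply: pleP; apply: ltW => //; exact: zlt.
Qed.

Definition ya := fmax [seq crd q i1 | q <- L' & crd p i0 < crd q i0].
Definition xb := fmax [seq crd q i0 | q <- L' & crd p i1 < crd q i1].
Definition pa := mk (crd p i0) ya 0.
Definition pbb := mk xb (crd p i1) 0.
Definition lift g := setc g i2 (crd p i2).

Lemma ya_ge q : q \in L' -> crd p i0 < crd q i0 -> crd q i1 <= ya.
Proof. move=> Hq h; apply: fmax_ge; apply: map_f; by rewrite mem_filter h. Qed.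
Lemma xb_ge q : q \in L' -> crd p i1 < crd q i1 -> crd q i0 <= xb.
Proof. move=> Hq h; apply: fmax_ge; apply: map_f; by rewrite mem_filter h. Qed.
Lemma ya_cases : ya = 0 \/ exists2 q, q \in L' & crd p i0 < crd q i0 /\ ya = crd q i1.
Proof.
case: (fmax_in [seq crd q i1 | q <- L' & crd p i0 < crd q i0]) => [h|]; first by left.
rewrite -/ya => /mapP [q]; rewrite mem_filter => /andP[h Hq] E; right; by exists q.
Qed.
Lemma xb_cases : xb = 0 \/ exists2 q, q \in L' & crd p i1 < crd q i1 /\ xb = crd q i0.
Proof.
case: (fmax_in [seq crd q i0 | q <- L' & crd p i1 < crd q i1]) => [h|]; first by left.
rewrite -/xb => /mapP [q]; rewrite mem_filter => /andP[h Hq] E; right; by exists q.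
Qed.
Lemma ya_ge0 : 0 <= ya. Proof. exact: fmax_ge0. Qed.
Lemma xb_ge0 : 0 <= xb. Proof. exact: fmax_ge0. Qed.
Lemma ya_lt : ya < crd p i1.
Proof.
case: ya_cases => [->|[q Hq [h ->]]]; last exact: dom01.
by case/andP: (pb i1).
Qed.
Lemma xb_lt : xb < crd p i0.
Proof.
case: xb_cases => [->|[q Hq [h ->]]]; last exact: dom10.
by case/andP: (pb i0).
Qed.


Lemma keep g : genL L' g -> ~ slt g p -> genL (p :: L') g.
Proof.
move=> [Hg Hm] Hs; split; first by apply/inR_cons.
move=> y /inR_cons [_ Hy] Hle; exact: Hm.
Qed.

Lemma lift0 g : genL L' g -> slt g p -> crd g i2 = 0.
Proof.
move=> Hg Hs; have /andP[h0 _] := boxE i2 Hg.1.1.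
move: h0; rewrite le_eqVlt => /orP[/eqP <- //|h0]; exfalso.
apply: (gen_downE (j:=i2) (t:=0) Hg) => //.
split; first by apply: box_setc; [exact: Hg.1.1|rewrite lexx ltr01].
move=> q Hq H; apply: (Hg.1.2 q Hq).
move: (H i0) (H i1) (H i2) (Hs i2) (zlt Hq); cr => a0 a1 a2 a3 a4.
apply: sltP => //; lra.
Qed.

Lemma lift_gen g : genL L' g -> slt g p -> genL (p :: L') (lift g).
Proof.
move=> Hg Hs; have g2 := lift0 Hg Hs; have Hb := Hg.1.1.
have p2 := pb i2; case/andP: p2 => p20 p21.
apply: gen_down.
  apply/inR_cons; split.
    by move=> H; move: (H i2); rewrite /lift; cr; rewrite ltxx.
  split; first by apply: box_setc => //; rewrite p21 ltW.
  move=> q Hq H; apply: (Hg.1.2 q Hq).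
  move: (H i0) (H i1) (qb i2 Hq); rewrite /lift; cr => a0 a1 /andP[a2 _].
  by apply: sltP => //; rewrite g2.
move=> j t t0; case: (ord3_cases j) => [->|[->|->]]; rewrite /lift; cr => ht.
- move=> /inR_cons [_ H]; apply: (gen_downE Hg t0 ht).
  have := boxE i0 Hb; case/andP => b0 b1.
  split; first by apply: box_setc => //; apply/andP; split => //; lra.
  move=> q Hq H'; apply: (H.2 q Hq).
  move: (H' i0) (H' i1) (H' i2) (zlt Hq); cr => a0 a1 a2 a3.
  apply: sltP; cr => //.
- move=> /inR_cons [_ H]; apply: (gen_downE Hg t0 ht).
  have := boxE i1 Hb; case/andP => b0 b1.
  split; first by apply: box_setc => //; apply/andP; split => //; lra.
  move=> q Hq H'; apply: (H.2 q Hq).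
  move: (H' i0) (H' i1) (H' i2) (zlt Hq); cr => a0 a1 a2 a3.
  apply: sltP; cr => //.
- move=> /inR_cons [H _]; apply: H; move: (Hs i0) (Hs i1) => h0 h1; by apply: sltP; cr.
Qed.

Lemma pa_gen : genL (p :: L') pa.
Proof.
have := pb i0; case/andP => p00 p01.
have := pb i1; case/andP => p10 p11.
have := pb i2; case/andP => p20 p21.
have y0 := ya_ge0; have y1 := ya_lt.
apply: gen_down.
  apply/inR_cons; split.
    by move=> H; move: (H i0); rewrite /pa; cr; rewrite ltxx.
  split.
    apply: boxP; rewrite /pa; cr; apply/andP; split; rewrite ?lexx ?ltr01 //; try lra.
  move=> q Hq H; move: (H i0) (H i1); rewrite /pa; cr => a0 a1.
  have := ya_ge Hq a0; lra.
move=> j t t0; case: (ord3_cases j) => [->|[->|->]]; rewrite /pa; cr => ht.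
- move=> /inR_cons [H _]; apply: H; apply: sltP; cr => //.
- case: ya_cases => [E|[q Hq [h E]]]; first by move: ht; rewrite E; lra.
  move=> /inR_cons [_ [_ H]]; apply: (H q Hq); apply: sltP; cr => //.
    by rewrite -E.
  by case/andP: (qb i2 Hq).
- lra.
Qed.

Lemma pbb_gen : genL (p :: L') pbb.
Proof.
have := pb i0; case/andP => p00 p01.
have := pb i1; case/andP => p10 p11.
have := pb i2; case/andP => p20 p21.
have y0 := xb_ge0; have y1 := xb_lt.
apply: gen_down.
  apply/inR_cons; split.
    by move=> H; move: (H i1); rewrite /pbb; cr; rewrite ltxx.
  split.
    apply: boxP; rewrite /pbb; cr; apply/andP; split; rewrite ?lexx ?ltr01 //; try lra.
  move=> q Hq H; move: (H i0) (H i1); rewrite /pbb; cr => a0 a1.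
  have := xb_ge Hq a1; lra.
move=> j t t0; case: (ord3_cases j) => [->|[->|->]]; rewrite /pbb; cr => ht.
- case: xb_cases => [E|[q Hq [h E]]]; first by move: ht; rewrite E; lra.
  move=> /inR_cons [_ [_ H]]; apply: (H q Hq); apply: sltP; cr => //.
    by rewrite -E.
  by case/andP: (qb i2 Hq).
- move=> /inR_cons [H _]; apply: H; apply: sltP; cr => //.
- lra.
Qed.


Lemma lift_notgen g : genL L' g -> slt g p -> ~ genL L' (lift g).
Proof.
move=> Hg Hs [_ Hm]; have g2 := lift0 Hg Hs.
have := pb i2; case/andP => p20 p21.
have E : g = lift g.
  apply: Hm; first exact: Hg.1.
  apply: pleP; rewrite /lift; cr => //; by rewrite g2 ltW.
by move: (congr1 (fun z => crd z i2) E); rewrite /lift; cr; rewrite g2 => h; move: p20; rewrite -h ltxx.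
Qed.

Lemma pa_notgen : ~ genL L' pa.
Proof.
move=> [_ Hm].
set t := fmax [seq crd q i0 | q <- L' & crd q i0 < crd p i0].
have := pb i0; case/andP => p00 p01.
have := pb i1; case/andP => p10 p11.
have y0 := ya_ge0; have y1 := ya_lt.
have t0 : 0 <= t by exact: fmax_ge0.
have tp : t < crd p i0.
  rewrite /t; case: (fmax_in [seq crd q i0 | q <- L' & crd q i0 < crd p i0]) => [->//|].
  by rewrite -/t => /mapP [q]; rewrite mem_filter => /andP[h _] ->.
have E : setc pa i0 t = pa.
  apply: Hm; last by apply: pleP; rewrite /pa; cr; rewrite ?lexx // ltW.
  split.
    apply: boxP; rewrite /pa; cr; apply/andP; split; rewrite ?lexx ?ltr01 //; lra.
  move=> q Hq H; move: (H i0) (H i1); rewrite /pa; cr => a0 a1.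
  case: (ltgtP (crd q i0) (crd p i0)) => [h|h|h].
  - have : crd q i0 <= t by apply: fmax_ge; apply: map_f; rewrite mem_filter h.
    lra.
  - have := ya_ge Hq h; lra.
  - by move: (cneq i0 i0 Hq); rewrite h eqxx.
by move: (congr1 (fun z => crd z i0) E); rewrite /pa; cr => h; move: tp; rewrite h ltxx.
Qed.

Lemma pbb_notgen : ~ genL L' pbb.
Proof.
move=> [_ Hm].
set t := fmax [seq crd q i1 | q <- L' & crd q i1 < crd p i1].
have := pb i0; case/andP => p00 p01.
have := pb i1; case/andP => p10 p11.
have y0 := xb_ge0; have y1 := xb_lt.
have t0 : 0 <= t by exact: fmax_ge0.
have tp : t < crd p i1.
  rewrite /t; case: (fmax_in [seq crd q i1 | q <- L' & crd q i1 < crd p i1]) => [->//|].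
  by rewrite -/t => /mapP [q]; rewrite mem_filter => /andP[h _] ->.
have E : setc pbb i1 t = pbb.
  apply: Hm; last by apply: pleP; rewrite /pbb; cr; rewrite ?lexx // ltW.
  split.
    apply: boxP; rewrite /pbb; cr; apply/andP; split; rewrite ?lexx ?ltr01 //; lra.
  move=> q Hq H; move: (H i0) (H i1); rewrite /pbb; cr => a0 a1.
  case: (ltgtP (crd q i1) (crd p i1)) => [h|h|h].
  - have : crd q i1 <= t by apply: fmax_ge; apply: map_f; rewrite mem_filter h.
    lra.
  - have := xb_ge Hq h; lra.
  - by move: (cneq i1 i1 Hq); rewrite h eqxx.
by move: (congr1 (fun z => crd z i1) E); rewrite /pbb; cr => h; move: tp; rewrite h ltxx.
Qed.

Lemma pa_ne_pbb : pa != pbb.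
Proof.
apply/eqP => E; move: (congr1 (fun z => crd z i0) E); rewrite /pa /pbb; cr => h.
have := pb i0; case/andP => p00 _.
case: xb_cases => [E0|[q Hq [_ E0]]].
  by move: p00; rewrite h E0 ltxx.
by move: (cneq i0 i0 Hq); rewrite -E0 -h eqxx.
Qed.


Lemma classify x : genL (p :: L') x ->
  genL L' x \/ (exists g, [/\ genL L' g, slt g p & x = lift g]) \/ x = pa \/ x = pbb.
Proof.
move=> Hx; case: (classic (genL L' x)) => [h|hn]; [by left|right].
have [Hns HxL'] := (inR_cons x).1 Hx.1.
have [j [t [t0 [tx Hy]]]] : exists j t, [/\ 0 <= t, t < crd x j & inR L' (setc x j t)].
  apply: NNPP => H; apply: hn; apply: gen_down => // j t t0 tx Hin; apply: H; by exists j, t.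
have Hys : slt (setc x j t) p.
  apply: NNPP => H; exact: (gen_downE Hx t0 tx) ((inR_cons _).2 (conj H Hy)).
have Hb := Hx.1.1.
have := boxE i0 Hb; case/andP => x00 x01.
have := boxE i1 Hb; case/andP => x10 x11.
have := boxE i2 Hb; case/andP => x20 x21.
have := pb i0; case/andP => p00 p01.
have := pb i1; case/andP => p10 p11.
have := pb i2; case/andP => p20 p21.
move: tx Hy Hys; case: (ord3_cases j) => [->|[->|->]] => tx Hy Hys;
  move: (Hys i0) (Hys i1) (Hys i2) tx; cr => s0 s1 s2 tx.
-
  right; left.
  have x0p : crd p i0 <= crd x i0.
    by rewrite leNgt; apply/negP => h; apply: Hns; apply: sltP.
  have xz : crd x i2 = 0.
    move: x20; rewrite le_eqVlt => /orP[/eqP <- //|h]; exfalso.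
    apply: (gen_downE (j:=i2) (t:=0) Hx) => //.
    apply/inR_cons; split.
      by move=> H; move: (H i0); cr; rewrite ltNge x0p.
    split; first by apply: box_setc => //; rewrite lexx ltr01.
    move=> q Hq H; apply: (HxL'.2 q Hq); move: (H i0) (H i1) (zlt Hq); cr => a0 a1 a2.
    apply: sltP => //; lra.
  have xp : crd x i0 = crd p i0.
    move: x0p; rewrite le_eqVlt => /orP[/eqP -> //|h]; exfalso.
    apply: (gen_downE (j:=i0) (t:=crd p i0) Hx) => //; first exact: ltW.
    apply/inR_cons; split.
      by move=> H; move: (H i0); cr; rewrite ltxx.
    apply: (up_closed Hy).
      by apply: pleP; cr; rewrite ?lexx // ltW.
    apply: box_setc => //; by rewrite p01 ltW.
  have y0 := ya_ge0; have y1 := ya_lt.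
  have xy1 : ya <= crd x i1.
    rewrite leNgt; apply/negP => h.
    case: ya_cases => [E|[q Hq [h0 E]]]; first by move: h; rewrite E; lra.
    apply: (HxL'.2 q Hq); apply: sltP; rewrite ?xp ?xz -?E //.
    by case/andP: (qb i2 Hq).
  have xy2 : crd x i1 <= ya.
    rewrite leNgt; apply/negP => h.
    apply: (gen_downE (j:=i1) (t:=ya) Hx) => //.
    apply/inR_cons; split.
      by move=> H; move: (H i0); cr; rewrite xp ltxx.
    split; first by apply: box_setc => //; apply/andP; split => //; lra.
    move=> q Hq H; move: (H i0) (H i1); cr; rewrite xp => a0 a1.
    have := ya_ge Hq a0; lra.
  apply: pt_eq; rewrite /pa; cr => //; lra.
-
  right; right.
  have x0p : crd p i1 <= crd x i1.
    by rewrite leNgt; apply/negP => h; apply: Hns; apply: sltP.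
  have xz : crd x i2 = 0.
    move: x20; rewrite le_eqVlt => /orP[/eqP <- //|h]; exfalso.
    apply: (gen_downE (j:=i2) (t:=0) Hx) => //.
    apply/inR_cons; split.
      by move=> H; move: (H i1); cr; rewrite ltNge x0p.
    split; first by apply: box_setc => //; rewrite lexx ltr01.
    move=> q Hq H; apply: (HxL'.2 q Hq); move: (H i0) (H i1) (zlt Hq); cr => a0 a1 a2.
    apply: sltP => //; lra.
  have xp : crd x i1 = crd p i1.
    move: x0p; rewrite le_eqVlt => /orP[/eqP -> //|h]; exfalso.
    apply: (gen_downE (j:=i1) (t:=crd p i1) Hx) => //; first exact: ltW.
    apply/inR_cons; split.
      by move=> H; move: (H i1); cr; rewrite ltxx.
    apply: (up_closed Hy).
      by apply: pleP; cr; rewrite ?lexx // ltW.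
    apply: box_setc => //; by rewrite p11 ltW.
  have y0 := xb_ge0; have y1 := xb_lt.
  have xy1 : xb <= crd x i0.
    rewrite leNgt; apply/negP => h.
    case: xb_cases => [E|[q Hq [h0 E]]]; first by move: h; rewrite E; lra.
    apply: (HxL'.2 q Hq); apply: sltP; rewrite ?xp ?xz -?E //.
    by case/andP: (qb i2 Hq).
  have xy2 : crd x i0 <= xb.
    rewrite leNgt; apply/negP => h.
    apply: (gen_downE (j:=i0) (t:=xb) Hx) => //.
    apply/inR_cons; split.
      by move=> H; move: (H i1); cr; rewrite xp ltxx.
    split; first by apply: box_setc => //; apply/andP; split => //; lra.
    move=> q Hq H; move: (H i0) (H i1); cr; rewrite xp => a0 a1.
    have := xb_ge Hq a1; lra.
  apply: pt_eq; rewrite /pbb; cr => //; lra.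
-
  left.
  have x0p : crd p i2 <= crd x i2.
    by rewrite leNgt; apply/negP => h; apply: Hns; apply: sltP.
  have xp : crd x i2 = crd p i2.
    move: x0p; rewrite le_eqVlt => /orP[/eqP -> //|h]; exfalso.
    apply: (gen_downE (j:=i2) (t:=crd p i2) Hx) => //; first exact: ltW.
    apply/inR_cons; split.
      by move=> H; move: (H i2); cr; rewrite ltxx.
    apply: (up_closed Hy).
      by apply: pleP; cr; rewrite ?lexx // ltW.
    apply: box_setc => //; by rewrite p21 ltW.
  exists (setc x i2 0); split.
  + apply: gen_down.
      split; first by apply: box_setc => //; rewrite lexx ltr01.
      move=> q Hq H; apply: (HxL'.2 q Hq); move: (H i0) (H i1) (zlt Hq); cr => a0 a1 a2.
      by apply: sltP; rewrite ?xp.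
    move=> j' t' t0' ; case: (ord3_cases j') => [->|[->|->]]; cr => ht Hin.
    * apply: (gen_downE (j:=i0) (t:=t') Hx) => //.
      apply/inR_cons; split.
        by move=> H; move: (H i2); cr; rewrite xp ltxx.
      split; first by apply: box_setc => //; apply/andP; split => //; lra.
      move=> q Hq H; apply: (Hin.2 q Hq); move: (H i0) (H i1); cr => a0 a1.
      apply: sltP; cr => //; by case/andP: (qb i2 Hq).
    * apply: (gen_downE (j:=i1) (t:=t') Hx) => //.
      apply/inR_cons; split.
        by move=> H; move: (H i2); cr; rewrite xp ltxx.
      split; first by apply: box_setc => //; apply/andP; split => //; lra.
      move=> q Hq H; apply: (Hin.2 q Hq); move: (H i0) (H i1); cr => a0 a1.
      apply: sltP; cr => //; by case/andP: (qb i2 Hq).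
    * lra.
  + by apply: sltP; cr.
  + by apply: pt_eq; rewrite /lift; cr.
Qed.


Definition sltb x y := [&& crd x i0 < crd y i0, crd x i1 < crd y i1 & crd x i2 < crd y i2].
Lemma sltbE x y : sltb x y <-> slt x y.
Proof.
split; first by case/and3P => *; apply: sltP.
by move=> H; apply/and3P; split; apply: H.
Qed.

Lemma step sG : uniq sG -> (forall x, x \in sG <-> genL L' x) ->
  exists s, [/\ uniq s, (forall x, x \in s <-> genL (p :: L') x) & size s = (size sG).+2].
Proof.
move=> Hu HG.
set s1 := [seq g <- sG | ~~ sltb g p].
set s2 := [seq lift g | g <- [seq g <- sG | sltb g p]].
have p2 := pb i2; case/andP: p2 => p20 p21.
have in1 x : x \in s1 -> genL L' x /\ ~ slt x p.
  by rewrite mem_filter => /andP[h /HG]; split => // /sltbE; apply/negP.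
have in2 x : x \in s2 -> exists g, [/\ genL L' g, slt g p & x = lift g].
  by case/mapP => g; rewrite mem_filter => /andP[/sltbE h /HG] ? ->; exists g.
exists (s1 ++ s2 ++ [:: pa; pbb]); split.
- rewrite cat_uniq filter_uniq //=; apply/andP; split.
    apply/hasPn => x; rewrite mem_cat => /orP[/in2 [g [Hg Hs ->]]|].
      by apply/negP => /in1 [/(lift_notgen Hg Hs)].
    rewrite !inE => /orP[/eqP ->|/eqP ->]; apply/negP => /in1 [].
      by move/pa_notgen.
    by move/pbb_notgen.
  rewrite cat_uniq; apply/and3P; split.
  + rewrite map_inj_in_uniq ?filter_uniq // => g h.
    rewrite !mem_filter => /andP[/sltbE hg /HG Hg] /andP[/sltbE hh /HG Hh] E.
    have g2 := lift0 Hg hg; have h2 := lift0 Hh hh.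
    apply: pt_eq; last by rewrite g2 h2.
      by move: (congr1 (fun z => crd z i0) E); rewrite /lift; cr.
    by move: (congr1 (fun z => crd z i1) E); rewrite /lift; cr.
  + apply/hasPn => x; rewrite !inE => /orP[/eqP ->|/eqP ->]; apply/negP => /in2 [g [_ _ E]];
      move: (congr1 (fun z => crd z i2) E); rewrite /lift /pa /pbb; cr => h;
      by move: p20; rewrite -h ltxx.
  + by rewrite /= inE pa_ne_pbb.
- move=> x; split.
    rewrite !mem_cat => /or3P[/in1 [Hg Hs]|/in2 [g [Hg Hs ->]]|].
    + exact: keep.
    + exact: lift_gen.
    + by rewrite !inE => /orP[/eqP ->|/eqP ->]; [exact: pa_gen|exact: pbb_gen].
  move=> Hx; have Hns := ((inR_cons x).1 Hx.1).1.
  case: (classify Hx) => [h|[[g [Hg Hs ->]]|[->|->]]].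
  + rewrite mem_cat; apply/orP; left; rewrite mem_filter (HG x).2 // andbT.
    by apply/negP => /sltbE.
  + rewrite mem_cat orbC mem_cat; apply/orP; left; apply/orP; left.
    by apply: map_f; rewrite mem_filter (HG g).2 // andbT; apply/sltbE.
  + by rewrite !mem_cat !inE eqxx !orbT.
  + by rewrite !mem_cat !inE eqxx !orbT.
- rewrite !size_cat size_map !size_filter /=.
  have E : (count (fun g => ~~ sltb g p) sG + count (fun g => sltb g p) sG = size sG :> nat)%N.
    by rewrite addnC count_predC.
  by rewrite addnA E addn2.
Qed.

End Step.

Definition WF L := [/\ uniq L, forall q, q \in L -> forall j, 0 < crd q j < 1,
  forall q q', q \in L -> q' \in L -> q != q' -> incomparable q q'
  & forall q q' j j', q \in L -> q' \in L -> crd q j = crd q' j' -> q = q' /\ j = j'].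

Lemma genL_eq L1 L2 x : L1 =i L2 -> genL L1 x <-> genL L2 x.
Proof.
move=> E.
have hR y : inR L1 y <-> inR L2 y.
  by split=> [[hb h]|[hb h]]; split=> // q Hq; apply: h; rewrite ?E // -E.
split=> [[hx hm]|[hx hm]]; split; try by apply/hR.
  by move=> y /hR; apply: hm.
by move=> y /hR; apply: hm.
Qed.

Lemma exmin L : L != [::] -> exists2 p, p \in L & forall q, q \in L -> crd p i2 <= crd q i2.
Proof.
elim: L => // a l IH _; case: (eqVneq l [::]) => [->|/IH [m Hm Hmin]].
  by exists a; rewrite ?mem_head // => q; rewrite inE => /eqP ->.
case: (leP (crd a i2) (crd m i2)) => h.
  exists a; first exact: mem_head.
  move=> q; rewrite inE => /orP[/eqP -> //|/Hmin]; exact: le_trans.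
exists m; first by rewrite inE Hm orbT.
move=> q; rewrite inE => /orP[/eqP -> |/Hmin //]; exact: ltW.
Qed.

Lemma pt0 j : crd (0 : pt R) j = 0. Proof. by rewrite /crd mxE. Qed.

Lemma mainL n : forall L, size L = n -> WF L ->
  exists s, [/\ uniq s, (forall x, x \in s <-> genL L x) & size s = (2 * n + 1)%N].
Proof.
elim: n => [|n IH] L.
  move/size0nil => -> _; exists [:: 0]; split => // x; rewrite inE; split.
    move/eqP => ->; split.
      split => [j|q //]; by rewrite pt0 lexx ltr01.
    move=> y [hy _] hle.
    have key j : crd y j = crd 0 j.
      move: (hle j) (boxE j hy); rewrite pt0 => a /andP[b _].
      by apply/eqP; rewrite eq_le a b.
    by apply: pt_eq; apply: key.
  move=> [[hb _] hm]; apply/eqP; symmetry; apply: hm.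
    by split => [j|q //]; rewrite pt0 lexx ltr01.
  by move=> j; rewrite pt0; case/andP: (boxE j hb).
move=> hs [hu hb hi hd].
have : L != [::] by apply/eqP => E; move: hs; rewrite E.
case/exmin => p Hp Hmin.
set L' := rem p L.
have EL : L =i p :: L' by apply: perm_mem; apply: perm_to_rem.
have hL q : q \in p :: L' -> q \in L by rewrite -EL.
have hL' q : q \in L' -> q \in L by move/mem_rem.
have [sG [u1 m1 s1]] : exists s, [/\ uniq s, (forall x, x \in s <-> genL L' x)
      & size s = (2 * n + 1)%N].
  apply: IH; first by rewrite size_rem // hs.
  split; first exact: rem_uniq.
  - by move=> q /hL'; apply: hb.
  - by move=> q q' /hL' ? /hL' ?; apply: hi.
  - by move=> q q' j j' /hL' ? /hL' ?; apply: hd.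
have [s [u2 m2 s2]] := @step p L'
  (fun q Hq => hb q (hL q Hq)) (fun q q' Hq Hq' => hi q q' (hL q Hq) (hL q' Hq'))
  (fun q q' j j' Hq Hq' => hd q q' j j' (hL q Hq) (hL q' Hq'))
  (negbT (mem_rem_uniqF p hu)) (fun q Hq => Hmin q (hL' q Hq)) sG u1 m1.
exists s; split => //.
  by move=> x; rewrite m2; apply: genL_eq => y; rewrite EL.
by rewrite s2 s1; lia.
Qed.
End Gen.

Theorem corollaryC (R : realFieldType) (rho : nat) (r : 'I_rho -> pt R)
  (hbox : forall (i : 'I_rho) (j : 'I_3), 0 < crd (r i) j /\ crd (r i) j < 1)
  (hinc : forall i i' : 'I_rho, i != i' -> incomparable (r i) (r i'))
  (hdist : forall (i i' : 'I_rho) (j j' : 'I_3),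
      crd (r i) j = crd (r i') j' -> i = i' /\ j = j') :
  exists s : seq (pt R),
    [/\ uniq s, (forall x : pt R, x \in s <-> generator r x)
      & size s = (2 * rho + 1)%N].
Proof.
set L := map r (enum 'I_rho).
have memL q : q \in L -> exists i, q = r i.
  by case/mapP => i _ ->; exists i.
have rinj : injective r.
  by move=> i i' E; have [] := hdist i i' i0 i0 (congr1 (fun z => crd z i0) E).
have hwf : WF L.
  split.
  - by rewrite map_inj_uniq // enum_uniq.
  - by move=> q /memL [i ->] j; have [a b] := hbox i j; rewrite a b.
  - move=> q q' /memL [i ->] /memL [i' ->] hne; apply: hinc.
    by apply/eqP => E; move: hne; rewrite E eqxx.
  - move=> q q' j j' /memL [i ->] /memL [i' ->] E.
    by have [-> ->] := hdist i i' j j' E.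
have [s [u m sz]] := mainL (size_map r (enum 'I_rho)) hwf.
have hR y : in_region r y <-> inR L y.
  split => [[hb h]|[hb h]]; split => //.
    by move=> q /memL [i ->]; apply: h.
  by move=> i; apply: h; apply: map_f; rewrite mem_enum.
exists s; split => //; last by rewrite sz size_enum_ord.
move=> x; rewrite m; split => [[hx hm]|[hx hm]]; split; try by apply/hR.
  by move=> y /hR; apply: hm.
by move=> y /hR; apply: hm.
Qed.
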